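(* Let $\underline A=(A_1,\dots,A_m)\in\mathcal C_k(d)$ with $\Theta_k(\underline A)>0$. For $1\le i\le m$ let $R_i:=\mathrm{Range}(A_i)$ and let $M_i$ be a real $d\times k$ matrix with $M_i^tM_i=I_k$ and $\mathrm{Range}(M_i)=R_i$. Define $C_{i,j}:=M_i^tA_iM_j$ for $1\le i,j\le m$. Then for all $1\le i,j\le m$: (1) $C_{i,j}\in\mathrm{GL}(k,\mathbb R)$; (2) $M_iC_{i,j}=A_iM_j$.
   Context: Fix integers $m,d\ge1$ and $1\le k\le d$. $\mathcal C_k(d)$ is the set of tuples $\underline A=(A_1,\dots,A_m)\in{\rm Mat}(d,\mathbb R)^m$ with $\mathrm{rank}(A_j)=k$ for all $j$. $\Theta_k(\underline A):=\min\{\|\wedge_k(A_aA_b)\|:1\le a,b\le m\}$, where $\wedge_kA$ is the $k$-th exterior power of a matrix $A$ (the matrix of its $k\times k$ minors); thus $\Theta_k(\underline A)>0$ means $\mathrm{rank}(A_aA_b)=k$ for all $a,b$. *)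

(* Defs.v *)
From HB Require Import structures.
From mathcomp Require Import all_boot all_order all_algebra.
From mathcomp Require Export reals.
From mathcomp Require Export all_boot all_order all_algebra.
Set Implicit Arguments. Unset Strict Implicit. Unset Printing Implicit Defensive.
Import Order.TTheory GRing.Theory Num.Theory.
Local Open Scope ring_scope.

(* The i-th element (in increasing order) of a k-subset S of 'I_d;
   the default value is irrelevant when #|S| = k. *)
Definition ksub_idx (d k : nat) (hk : (k <= d)%N) (S : {set 'I_d}) (i : 'I_k)
  : 'I_d := nth (widen_ord hk i) (enum S) i.

Definition kminor (R : realType) (d k : nat) (hk : (k <= d)%N)
  (A : 'M[R]_d) (S T : {set 'I_d}) : R :=
  \det (\matrix_(i < k, j < k) A (ksub_idx hk S i) (ksub_idx hk T j)).

(* || wedge_k A || : norm (max-abs of the entries) of the k-th exterior power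
   of A, whose entries are the k x k minors of A indexed by pairs of k-subsets. *)
Definition wedge_norm (R : realType) (d k : nat) (hk : (k <= d)%N)
  (A : 'M[R]_d) : R :=
  \big[Num.max/0]_(S : {set 'I_d} | #|S| == k)
     \big[Num.max/0]_(T : {set 'I_d} | #|T| == k) `|kminor hk A S T|.

(* Theta_k(A_1,...,A_m) = min_{a,b} || wedge_k (A_a A_b) || (0 if m = 0). *)
Definition Theta (R : realType) (m d k : nat) (hk : (k <= d)%N)
  (A : 'I_m -> 'M[R]_d) : R :=
  let l := [seq wedge_norm hk (A a *m A b) | a <- enum 'I_m, b <- enum 'I_m] in
  foldr Num.min (head 0 l) l.

Definition in_Ck (R : realType) (m d : nat) (k : nat) (A : 'I_m -> 'M[R]_d) : Prop :=
  forall j, \rank (A j) = k.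

(* Main.v *)
Require Import Defs.
Import Order.TTheory GRing.Theory Num.Theory.
Local Open Scope ring_scope.

Lemma rank_mxsub (R : realType) m n m' n' (f : 'I_m' -> 'I_m) (g : 'I_n' -> 'I_n)
  (B : 'M[R]_(m, n)) : (\rank (\matrix_(i < m', j < n') B (f i) (g j)) <= \rank B)%N.
Proof.
have -> : \matrix_(i < m', j < n') B (f i) (g j) = mxsub f g B
  by apply/matrixP => i j; rewrite !mxE.
rewrite mxsubrc rowsubE; apply: leq_trans (mxrankM_maxr _ _) _.
rewrite -mxrank_tr -[X in (_ <= X)%N]mxrank_tr.
have -> : (colsub g B)^T = rowsub g B^T by apply/matrixP => i j; rewrite !mxE.
by rewrite rowsubE; apply: mxrankM_maxr.
Qed.

Lemma kminor_rank (R : realType) d k (hk : (k <= d)%N) (B : 'M[R]_d) S T :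
  kminor hk B S T != 0 -> (k <= \rank B)%N.
Proof.
move=> h.
have hu : (\matrix_(i < k, j < k) B (ksub_idx hk S i) (ksub_idx hk T j)) \in unitmx.
  by rewrite unitmxE unitfE.
move: (mxrank_unit hu) => e.
rewrite -[X in (X <= _)%N]e.
exact: (@rank_mxsub R d d k k (ksub_idx hk S) (ksub_idx hk T) B).
Qed.

Lemma wedge_pos (R : realType) d k (hk : (k <= d)%N) (B : 'M[R]_d) :
  0 < wedge_norm hk B -> (k <= \rank B)%N.
Proof.
move=> h.
case: (boolP [exists S : {set 'I_d}, exists T : {set 'I_d}, kminor hk B S T != 0]).
  by case/existsP => S /existsP [T /(@kminor_rank R)].
move/existsPn => H; exfalso; move: h.
suff -> : wedge_norm hk B = 0 by rewrite ltxx.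
rewrite /wedge_norm; apply: (big_ind (fun x : R => x = 0)) => //.
  by move=> x y -> ->; rewrite maxxx.
move=> S _; apply: (big_ind (fun x : R => x = 0)) => //.
  by move=> x y -> ->; rewrite maxxx.
move=> T _.
have := H S; move/existsPn/(_ T); rewrite negbK => /eqP ->.
by rewrite normr0.
Qed.

Lemma foldr_min_le (R : realType) (x y : R) l : y \in l -> foldr Num.min x l <= y.
Proof.
elim: l => // a l IH; rewrite inE /= => /orP [/eqP -> | /IH h].
  by rewrite ge_min lexx.
by rewrite ge_min h orbT.
Qed.

Lemma proj_eq (R : realType) d k (M : 'M[R]_(d, k)) (A : 'M[R]_d) :
  M^T *m M = 1%:M -> (M^T :=: A^T)%MS -> M *m M^T *m A = A.
Proof.
move=> hM hR.
have : (A^T <= M^T)%MS by rewrite -hR submx_refl.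
case/submxP => X hX.
have -> : A = M *m X^T by rewrite -[A]trmxK hX trmx_mul trmxK.
by rewrite -mulmxA (mulmxA M^T) hM mul1mx.
Qed.

Theorem lemma4p4 (R : realType) (m d k : nat) (hm : (1 <= m)%N) (hd : (1 <= d)%N)
  (hk1 : (1 <= k)%N) (hk : (k <= d)%N)
  (A : 'I_m -> 'M[R]_d) (M : 'I_m -> 'M[R]_(d, k)) :
  in_Ck k A ->
  0 < Theta hk A ->
  (forall i, (M i)^T *m M i = 1%:M) ->
  (forall i, ((M i)^T :=: (A i)^T)%MS) ->
  forall i j : 'I_m,
    let C := (M i)^T *m A i *m M j in
    C \in unitmx /\ M i *m C = A i *m M j.
Proof.
move=> _ hT hM hR i j C.
have h2 : M i *m C = A i *m M j.
  by rewrite /C !mulmxA (@proj_eq R d k _ _ (hM i) (hR i)).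
split=> //.
have hw : 0 < wedge_norm hk (A i *m A j).
  apply: lt_le_trans hT _; apply: (@foldr_min_le R).
  by apply: allpairs_f; rewrite mem_enum.
have r1 := @wedge_pos R d k hk _ hw.
have e : A i *m A j = A i *m M j *m ((M j)^T *m A j).
  by rewrite -mulmxA (mulmxA (M j)) (@proj_eq R d k _ _ (hM j) (hR j)).
rewrite -row_free_unit /row_free eqn_leq rank_leq_row /=.
apply: leq_trans r1 _; rewrite e; apply: leq_trans (mxrankM_maxl _ _) _.
rewrite -h2; exact: mxrankM_maxr.
Qed.
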